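(* Let $\{G_i\}_{i\in I}$ be a family of profinite-$C$ groups. Then the cartesian product $\mathrm{Cr}_{i\in I}\,G_i$ (with the product topology) is a profinite-$C$ group. As a consequence, the inverse limit of any inverse system of profinite-$C$ groups (with continuous homomorphisms) is a profinite-$C$ group.
   Context: A permutable complement of a subgroup $H$ of a group $G$ is a subgroup $K$ with $G=HK$ and $H\cap K=1$. A profinite group $G$ is a profinite-$C$ group if every closed subgroup of $G$ has a closed permutable complement in $G$. $\mathrm{Cr}_{i\in I}\,G_i$ denotes the full cartesian product. *)

(* Defs.v *)
From HB Require Import structures.
From mathcomp Require Import all_boot all_order all_algebra.
From mathcomp Require Import all_classical all_reals all_analysis.
Set Implicit Arguments. Unset Strict Implicit. Unset Printing Implicit Defensive.
Import Order.TTheory.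
Local Open Scope classical_set_scope.

Definition topological_group (T : topologicalType)
  (mul : T -> T -> T) (inv : T -> T) (one : T) : Prop :=
  [/\ associative mul, left_id one mul, left_inverse one inv mul,
      continuous (fun p : T * T => mul p.1 p.2) & continuous inv].

Definition profinite_group (T : topologicalType)
  (mul : T -> T -> T) (inv : T -> T) (one : T) : Prop :=
  [/\ topological_group mul inv one, compact [set: T], hausdorff_space T
    & totally_disconnected [set: T]].

Definition is_subgroup (T : Type) (mul : T -> T -> T) (inv : T -> T) (one : T)
  (H : set T) : Prop :=
  [/\ H one, (forall x y, H x -> H y -> H (mul x y)) & (forall x, H x -> H (inv x))].

Definition permutable_complement (T : Type) (mul : T -> T -> T) (one : T)
  (H K : set T) : Prop :=
  (forall g, exists h k, [/\ H h, K k & g = mul h k]) /\ H `&` K = [set one].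

Definition profinite_C (T : topologicalType)
  (mul : T -> T -> T) (inv : T -> T) (one : T) : Prop :=
  profinite_group mul inv one /\
  forall H : set T, is_subgroup mul inv one H -> closed H ->
    exists K : set T, [/\ is_subgroup mul inv one K, closed K &
                          permutable_complement mul one H K].

Definition inv_limit {d : Order.disp_t} {I : porderType d}
  (G : I -> topologicalType)
  (f : forall i j : I, (i <= j)%O -> G j -> G i) : set (prod_topology G) :=
  [set x | forall (i j : I) (hij : (i <= j)%O), f i j hij (x j) = x i].

(* Main.v *)
Require Import Defs.
From HB Require Import structures.
From mathcomp Require Import all_boot all_order all_algebra.
From mathcomp Require Import all_classical all_reals all_analysis.
From mathcomp Require Import wochoice zify.
Set Implicit Arguments. Unset Strict Implicit. Unset Printing Implicit Defensive.
Local Open Scope classical_set_scope.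

Section Grp.
Variables (T : Type) (mul : T -> T -> T) (inv : T -> T) (one : T).
Hypotheses (mA : associative mul) (m1 : left_id one mul) (mV : left_inverse one inv mul).

Lemma gmulKg x y : mul (inv x) (mul x y) = y.
Proof. by rewrite mA mV m1. Qed.
Lemma gmulgV x : mul x (inv x) = one.
Proof.
by rewrite -{1}(m1 (mul x (inv x))) -{1}(mV (inv x)) -mA (gmulKg x (inv x)) mV.
Qed.
Lemma gmulg1 x : mul x one = x.
Proof. by rewrite -(mV x) mA gmulgV m1. Qed.
Lemma gmulKVg x y : mul x (mul (inv x) y) = y.
Proof. by rewrite mA gmulgV m1. Qed.
Lemma ginvM x y : inv (mul x y) = mul (inv y) (inv x).
Proof.
have h : mul (mul x y) (mul (inv y) (inv x)) = one.
  by rewrite -mA (mA y) gmulgV m1 gmulgV.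
by rewrite -(gmulKg (mul x y) (mul (inv y) (inv x))) h gmulg1.
Qed.
Lemma ginv1 : inv one = one.
Proof. by rewrite -{2}(mV one) gmulg1. Qed.
Lemma gmulI x y z : mul x y = mul x z -> y = z.
Proof. by move=> h; rewrite -(gmulKg x y) h gmulKg. Qed.
End Grp.

Lemma continuous_pair_op (X A B C : topologicalType) (m : A -> B -> C)
  (u : X -> A) (v : X -> B) :
  continuous (fun p : A * B => m p.1 p.2) -> continuous u -> continuous v ->
  continuous (fun x => m (u x) (v x)).
Proof.
move=> hm hu hv x; apply: continuous2_cvg; [exact: (hm (u x, v x))|exact: hu|exact: hv].
Qed.

Lemma continuous_into_prod (X : topologicalType) (I : Type) (G : I -> topologicalType)
  (u : X -> prod_topology G) :
  (forall i, continuous (fun x => u x i)) -> continuous u.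
Proof.
move=> hu x; apply/cvg_sup => i.
exact: (@continuous_comp_initial _ _ (G i) (fun g : prod_topology G => g i) u (hu i) x).
Qed.

Lemma compact_fip (T : topologicalType) (I : eqType) (C : set T) (E : I -> set T) :
  compact C -> (forall i, closed (E i)) ->
  (forall s : seq I, exists x, C x /\ forall i, i \in s -> E i x) ->
  exists x, C x /\ forall i, E i x.
Proof.
move=> cC cE fip.
pose B (s : seq I) := [set x | C x /\ forall i, i \in s -> E i x].
have FF : Filter (filter_from setT B).
  apply: filter_from_filter; first by exists [::].
  move=> s1 s2 _ _; exists (s1 ++ s2) => // x [Cx h].
  by split; split=> // i hi; apply: h; rewrite mem_cat hi ?orbT.
have PF : ProperFilter (filter_from setT B).
  by apply: filter_from_proper => // s _; have [x hx] := fip s; exists x.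
have [|p [Cp clp]] := cC _ PF.
  by exists [::] => // x [].
exists p; split => // i; apply: cE => U Up.
have [|x [[_ hx] Ux]] := clp (B [:: i]) U _ Up.
  by exists [:: i].
by exists x; split => //; apply: hx; rewrite mem_seq1.
Qed.

Section WO.
Variables (I : eqType) (R : rel I).
Hypothesis wo : well_order R.

Lemma wo_min (A : set I) : (exists x, A x) -> exists m, A m /\ forall x, A x -> R m x.
Proof.
move=> [x Ax].
have ne : nonempty (fun z => `[< A z >]).
  by exists x; rewrite unfold_in; apply/asboolP.
have [m [[hm hlb] _]] := wo ne.
exists m; split; first by move: hm; rewrite unfold_in => /asboolP.
by move=> y Ay; apply: hlb; rewrite unfold_in; apply/asboolP.
Qed.

Lemma wo_pair x y : exists m, (m = x \/ m = y) /\ R m x /\ R m y.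
Proof.
have [m [hm hR]] := wo_min (A := fun z => z = x \/ z = y) (ex_intro _ x (or_introl erefl)).
by exists m; split => //; split; apply: hR; [left|right].
Qed.

Lemma wo_refl x : R x x.
Proof. by have [m [[->|->] [h1 h2]]] := wo_pair x x. Qed.

Lemma wo_total x y : R x y || R y x.
Proof. by have [m [[->|->] [h1 h2]]] := wo_pair x y; rewrite ?h1 ?h2 ?orbT. Qed.

Lemma wo_anti x y : R x y -> R y x -> x = y.
Proof.
move=> hxy hyx.
have ne : nonempty (fun t => (t == x) || (t == y)).
  by exists x; rewrite unfold_in /= eqxx.
have [z [_ uz]] := wo ne.
have mx : minimum_of R (fun t => (t == x) || (t == y)) x.
  split; first by rewrite unfold_in /= eqxx.
  by move=> t; rewrite unfold_in /= => /orP[/eqP->|/eqP->] //; exact: wo_refl.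
have my : minimum_of R (fun t => (t == x) || (t == y)) y.
  split; first by rewrite unfold_in /= eqxx orbT.
  by move=> t; rewrite unfold_in /= => /orP[/eqP->|/eqP->] //; exact: wo_refl.
by rewrite -(uz _ mx) -(uz _ my).
Qed.

Lemma wo_trans x y z : R x y -> R y z -> R x z.
Proof.
move=> hxy hyz.
have [m [hm hR]] := wo_min (A := fun t => t = x \/ t = y \/ t = z) (ex_intro _ x (or_introl erefl)).
have Rmx := hR x (or_introl erefl).
have Rmy := hR y (or_intror (or_introl erefl)).
have Rmz := hR z (or_intror (or_intror erefl)).
case: hm => [mx|[my|mz]].
- by rewrite -mx.
- by rewrite my in Rmx; rewrite (wo_anti hxy Rmx).
- by rewrite mz in Rmy; rewrite -(wo_anti hyz Rmy).
Qed.

Lemma wo_max (s : seq I) : s != [::] -> exists m, m \in s /\ forall j, j \in s -> R j m.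
Proof.
elim: s => // x [|y s] IH _.
  by exists x; split; rewrite ?mem_seq1 // => j; rewrite mem_seq1 => /eqP->; exact: wo_refl.
have [m [ms hm]] := IH isT.
case/orP: (wo_total m x) => hmx.
  exists x; split; first by rewrite mem_head.
  move=> j; rewrite in_cons => /orP[/eqP->|js]; first exact: wo_refl.
  exact: wo_trans (hm _ js) hmx.
exists m; split; first by rewrite in_cons ms orbT.
by move=> j; rewrite in_cons => /orP[/eqP->|js]; [|exact: hm].
Qed.
End WO.

Lemma fst_cont (A B : topologicalType) : continuous (@fst A B).
Proof. by move=> [a b]; exact: cvg_fst. Qed.
Lemma snd_cont (A B : topologicalType) : continuous (@snd A B).
Proof. by move=> [a b]; exact: cvg_snd. Qed.

Lemma sv_inj (T : Type) (A : set T) : injective (@set_val T A).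
Proof. by move=> x y; rewrite set_valE; exact: val_inj. Qed.

Lemma sv_cont (T : topologicalType) (A : set T) : continuous (@set_val T A).
Proof. exact: (@initial_continuous A T set_val). Qed.

Lemma sub_open (T : topologicalType) (A : set T) (U : set A) :
  open U -> exists2 W : set T, open W & set_val @^-1` W = U.
Proof. by case=> W oW <-; exists W. Qed.

Lemma closed_eqz (X Y : topologicalType) (u v : X -> Y) :
  hausdorff_space Y -> continuous u -> continuous v -> closed [set x | u x = v x].
Proof.
move=> hs cu cv; rewrite -openC openE => x /= nx.
rewrite open_hausdorff in hs.
have /hs [[A B] /= [uA vB] [oA oB /eqP AB0]] : u x != v x by apply/eqP.
rewrite inE in uA; rewrite inE in vB.
have nA : nbhs (u x) A by apply: open_nbhs_nbhs.
have nB : nbhs (v x) B by apply: open_nbhs_nbhs.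
have n1 : nbhs x (u @^-1` A) by exact: cu x _ nA.
have n2 : nbhs x (v @^-1` B) by exact: cv x _ nB.
rewrite /interior; apply: filterS (filterI n1 n2).
move=> y [/= Ay By] e; rewrite -e in By.
by have : (A `&` B) (u y) by []; rewrite AB0.
Qed.


Lemma prod_group (I : Type) (G : I -> topologicalType)
  (mul : forall i, G i -> G i -> G i) (inv : forall i, G i -> G i)
  (one : forall i, G i) :
  (forall i, profinite_group (mul i) (inv i) (one i)) ->
  profinite_group (T := prod_topology G)
    (fun x y i => mul i (x i) (y i)) (fun x i => inv i (x i)) one.
Proof.
move=> hG.
have mA i : associative (mul i) by case: (hG i) => [[]].
have m1 i : left_id (one i) (mul i) by case: (hG i) => [[]].
have mV i : left_inverse (one i) (inv i) (mul i) by case: (hG i) => [[]].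
have cm i : continuous (fun p : G i * G i => mul i p.1 p.2) by case: (hG i) => [[]].
have ci i : continuous (inv i) by case: (hG i) => [[]].
have cp i : compact [set: G i] by case: (hG i).
have hs i : hausdorff_space (G i) by case: (hG i).
have td i : totally_disconnected [set: G i] by case: (hG i).
split.
- split.
  + by move=> x y z; apply: functional_extensionality_dep => i; exact: mA.
  + by move=> x; apply: functional_extensionality_dep => i; exact: m1.
  + by move=> x; apply: functional_extensionality_dep => i; exact: mV.
  + apply: continuous_into_prod => i /=.
    apply: (continuous_pair_op (cm i)).
    * move=> p; exact: (continuous_comp (@fst_cont _ _ p) (@proj_continuous {classic I} G i p.1)).
    * move=> p; exact: (continuous_comp (@snd_cont _ _ p) (@proj_continuous {classic I} G i p.2)).
  + apply: continuous_into_prod => i /= x.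
    exact: (continuous_comp (@proj_continuous {classic I} G i x) (ci i (x i))).
- have := @tychonoff {classic I} G (fun i => setT) cp.
  by congr compact; rewrite predeqE.
- exact: (@hausdorff_product {classic I} G hs).
- have := @totally_disconnected_prod {classic I} G (fun i => setT) td.
  by congr totally_disconnected; rewrite predeqE.
Qed.


Lemma prod_C (I : Type) (G : I -> topologicalType)
  (mul : forall i, G i -> G i -> G i) (inv : forall i, G i -> G i)
  (one : forall i, G i) :
  (forall i, profinite_C (mul i) (inv i) (one i)) ->
  profinite_C (T := prod_topology G)
    (fun x y i => mul i (x i) (y i)) (fun x i => inv i (x i)) one.
Proof.
move=> hC.
have hG i := (hC i).1.
have mA i : associative (mul i) by case: (hG i) => [[]].
have m1 i : left_id (one i) (mul i) by case: (hG i) => [[]].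
have mV i : left_inverse (one i) (inv i) (mul i) by case: (hG i) => [[]].
have cm i : continuous (fun p : G i * G i => mul i p.1 p.2) by case: (hG i) => [[]].
have ci i : continuous (inv i) by case: (hG i) => [[]].
have hs i : hausdorff_space (G i) by case: (hG i).
have hP := prod_group hG.
have cpT : compact [set: prod_topology G] by case: hP.
split => // H Hsub Hcl.
have [H1 HM HI] := Hsub.
have cH : compact H by apply: (subclosed_compact Hcl cpT).
have [R wo] := well_ordering_principle {classic I}.
pose Z (i : {classic I}) := [set y : prod_topology G | forall j : {classic I}, ~ R i j -> y j = one j].
pose P (i : {classic I}) := [set a : G i | exists y, H y /\ Z i y /\ y i = a].
have Psub i : is_subgroup (mul i) (inv i) (one i) (P i).
  split.
  - by exists one; split.
  - move=> a b [y [Hy [Zy <-]]] [z [Hz [Zz <-]]].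
    exists (fun i => mul i (y i) (z i)); split; first exact: HM.
    by split=> // j hj; rewrite (Zy j hj) (Zz j hj) m1.
  - move=> a [y [Hy [Zy <-]]]; exists (fun i => inv i (y i)); split; first exact: HI.
    by split=> // j hj; rewrite (Zy j hj) (ginv1 (mA j) (m1 j) (mV j)).
have Zcl i : closed (Z i).
  have -> : Z i = \bigcap_(j in [set j | ~ R i j]) (fun y : prod_topology G => y j) @^-1` [set one j].
    by rewrite predeqE => y; split => [hy j hj|hy j hj]; [exact: hy|exact: hy].
  apply: closed_bigI => j _; apply: preimage_closed.
    by move=> y _; exact: (@proj_continuous {classic I} G j).
  exact: accessible_closed_set1 (hausdorff_accessible (hs j)) _.
have Pcl i : closed (P i).
  have -> : P i = (fun y : prod_topology G => y i) @` (H `&` Z i).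
    by rewrite predeqE => a; split => [[y [Hy [Zy <-]]]|[y [Hy Zy] <-]]; exists y.
  apply: compact_closed; first exact: hs.
  apply: continuous_compact.
    by apply: continuous_subspaceT; exact: (@proj_continuous {classic I} G i).
  by apply: (subclosed_compact (closedI Hcl (Zcl i)) cpT).
have hK i : exists K : set (G i), [/\ is_subgroup (mul i) (inv i) (one i) K,
    closed K & permutable_complement (mul i) (one i) (P i) K].
  exact: (hC i).2 (P i) (Psub i) (Pcl i).
pose Kf i := proj1_sig (cid (hK i)).
have hKf i : [/\ is_subgroup (mul i) (inv i) (one i) (Kf i),
    closed (Kf i) & permutable_complement (mul i) (one i) (P i) (Kf i)].
  exact: proj2_sig (cid (hK i)).
exists [set x : prod_topology G | forall i, Kf i (x i)].
split.
- split.
  + by move=> i; case: (hKf i) => [[]].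
  + by move=> x y hx hy i; case: (hKf i) => [[_ h _]] _ _; exact: h.
  + by move=> x hx i; case: (hKf i) => [[_ _ h]] _ _; exact: h.
- have -> : [set x : prod_topology G | forall i, Kf i (x i)] =
      \bigcap_(i in setT) (fun y : prod_topology G => y i) @^-1` Kf i.
    by rewrite predeqE => y; split => [hy j _|hy j]; [exact: hy|exact: hy].
  apply: closed_bigI => j _; apply: preimage_closed.
    by move=> y _; exact: (@proj_continuous {classic I} G j).
  by case: (hKf j).
- split.
  + move=> g.
    have [h [Hh hE]] : exists h, H h /\ forall i : {classic I}, Kf i (mul i (inv i (h i)) (g i)).
      apply: (compact_fip (C := H) (E := fun i : {classic I} => [set h : prod_topology G | Kf i (mul i (inv i (h i)) (g i))])) => //.
        move=> i; apply: (@preimage_closed _ _ (fun h : prod_topology G => mul i (inv i (h i)) (g i)) (Kf i)).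
          move=> y _; apply: (continuous_pair_op (cm i)); last exact: cst_continuous.
          move=> x; exact: (continuous_comp (@proj_continuous {classic I} G i x) (ci i (x i))).
        by case: (hKf i).
      move=> s.
      elim: {s}(size s).+1 {-2}s (ltnSn (size s)) => // n IHn s hs'.
      case: (eqVneq s [::]) => [->|sne]; first by exists one; split.
      have [m [ms hm]] := wo_max wo sne.
      pose s' := seq.filter (predC1 m) s.
      have [h0 [Hh0 hh0]] : exists h, H h /\ forall i, i \in s' -> Kf i (mul i (inv i (h i)) (g i)).
        apply: IHn.
        have e : count (predC1 m) s = count (predC (pred1 m)) s by apply: eq_count.
        have c1 := count_predC (pred1 m) s.
        have c2 : 0 < count (pred1 m) s by rewrite -has_count has_pred1.
        rewrite /s' size_filter e.
        have lt1 : count (predC (pred1 m)) s < size s.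
          by rewrite -c1 -{1}(add0n (count (predC (pred1 m)) s)) ltn_add2r.
        exact: leq_trans lt1 hs'.
      case: (hKf m) => _ _ [hdec _].
      have [p [k [Pp Kk e]]] := hdec (mul m (inv m (h0 m)) (g m)).
      case: Pp => y [Hy [Zy ym]].
      exists (fun i => mul i (h0 i) (y i)); split; first exact: HM.
      move=> j js; case: (eqVneq j m) => [->|jm].
        by rewrite /= ym (ginvM (mA m) (m1 m) (mV m)) -mA e (gmulKg (mA m) (m1 m) (mV m)).
      rewrite /=; have hj : j \in s' by rewrite mem_filter /= jm js.
      have nR : ~ R m j by move=> Rmj; rewrite (wo_anti wo (hm j js) Rmj) eqxx in jm.
      by rewrite (Zy j nR) (gmulg1 (mA j) (m1 j) (mV j)); exact: hh0 j hj.
    exists h, (fun i => mul i (inv i (h i)) (g i)); split => //.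
    by apply: functional_extensionality_dep => i; rewrite (gmulKVg (mA i) (m1 i) (mV i)).
  + rewrite predeqE => x; split.
    * move=> [Hx Kx]; apply: functional_extensionality_dep => i.
      apply: contrapT => xi.
      have [m [Am hmin]] := @wo_min _ _ wo (fun j => x j <> one j) (ex_intro _ i xi).
      have Pm : P m (x m).
        exists x; split => //; split => // j nR; apply: contrapT => xj; apply: nR.
        exact: hmin j xj.
      case: (hKf m) => _ _ [_ hint].
      have : (P m `&` Kf m) (x m) by split.
      by rewrite hint.
    * move=> ->; split => // i; by case: (hKf i) => [[]].
Qed.


Lemma sub_C (T : topologicalType) (mul : T -> T -> T) (inv : T -> T) (one : T)
  (L : set T) (lmul : L -> L -> L) (linv : L -> L) (lone : L) :
  profinite_C mul inv one -> is_subgroup mul inv one L -> closed L ->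
  (forall x y, set_val (lmul x y) = mul (set_val x) (set_val y)) ->
  (forall x, set_val (linv x) = inv (set_val x)) -> set_val lone = one ->
  profinite_C lmul linv lone.
Proof.
move=> [[[mA m1 mV cm ci] cpT hs td] Cp] [L1 LM LI] Lcl emul einv eone.
have svc := @sv_cont T L.
have svi := @sv_inj T L.
split.
- split.
  + split.
    * by move=> x y z; apply: svi; rewrite !emul mA.
    * by move=> x; apply: svi; rewrite emul eone m1.
    * by move=> x; apply: svi; rewrite emul einv eone mV.
    * apply: (@continuous_comp_initial _ _ _ (@set_val T L)).
      have -> : (@set_val T L) \o (fun p : L * L => lmul p.1 p.2) =
          (fun p : L * L => mul (set_val p.1) (set_val p.2)).
        by apply: funext => p; rewrite /= emul.
      apply: (continuous_pair_op cm).
      - by move=> p; exact: (continuous_comp (@fst_cont _ _ p) (svc p.1)).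
      - by move=> p; exact: (continuous_comp (@snd_cont _ _ p) (svc p.2)).
    * apply: (@continuous_comp_initial _ _ _ (@set_val T L)).
      have -> : (@set_val T L) \o linv = (fun p : L => inv (set_val p)).
        by apply: funext => p; rewrite /= einv.
      by move=> p; exact: (continuous_comp (svc p) (ci _)).
  + have cL : compact L by apply: (subclosed_compact Lcl cpT).
    move=> F PF _.
    have hF'L : (set_val @ F) L.
      by rewrite /fmap /=; apply: filterS (filterT) => x _; exact: set_valP.
    have [p [Lp clp]] := cL _ (fmap_proper_filter set_val PF) hF'L.
    exists (exist _ p (mem_set Lp)); split => //.
    move=> A B FA; rewrite nbhsE => -[U [oU Ux] UB].
    have [W oW eW] := sub_open oU.
    have nW : nbhs p W.
      apply: open_nbhs_nbhs; split => //.
      by move: Ux; rewrite -eW.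
    have F'A : (set_val @ F) (set_val @` A).
      have : F (set_val @^-1` (set_val @` A)) by apply: filterS FA => a Aa; exists a.
      by [].
    have [t [[a Aa <-] Wa]] := clp _ _ F'A nW.
    by exists a; split => //; apply: UB; rewrite -eW.
  + rewrite open_hausdorff => x y xy.
    have hxy : set_val x != set_val y by apply: contra_neq xy; exact: svi.
    rewrite open_hausdorff in hs.
    have [[A B] /= [xA yB] [oA oB /eqP AB0]] := hs _ _ hxy.
    exists (set_val @^-1` A, set_val @^-1` B) => /=.
      by rewrite !inE; rewrite inE in xA; rewrite inE in yB.
    split; [exact: (proj1 (continuousP _) svc) | exact: (proj1 (continuousP _) svc) |].
    by rewrite -preimage_setI AB0 preimage_set0.
  + move=> x _; rewrite eqEsubset; split; last first.
      by move=> ? ->; exact: connected_component_refl.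
    move=> z [C [Cx _ ctC] Cz].
    have ctC' : connected (set_val @` C).
      apply: (connected_continuous_connected ctC).
      exact: continuous_subspaceT.
    have : connected_component [set: T] (set_val x) (set_val z).
      by exists (set_val @` C); [split => //; exists x|exists z].
    by rewrite (td _ I) => /svi.
- move=> H [H1 HM HI] Hcl.
  pose H' := set_val @` H.
  have H'sub : is_subgroup mul inv one H'.
    split.
    + by rewrite -eone; exists lone.
    + by move=> a b [x Hx <-] [y Hy <-]; exists (lmul x y); [exact: HM|exact: emul].
    + by move=> a [x Hx <-]; exists (linv x); [exact: HI|exact: einv].
  have H'cl : closed H'.
    have [W oW eW] := sub_open (closed_openC Hcl).
    have -> : H' = L `&` ~` W.
      rewrite predeqE => t; split.
        move=> [a Ha <-]; split; first exact: set_valP.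
        move=> Wa.
        have : (set_val @^-1` W) a by [].
        by rewrite eW.
      move=> [Lt nWt]; exists (exist _ t (mem_set Lt)) => //.
      apply: contrapT => nH.
      have : (~` H) (exist _ t (mem_set Lt)) by [].
      by rewrite -eW.
    by apply: closedI => //; apply: open_closedC.
  have [K' [[K1 KM KI] Kcl [dec int]]] := Cp H' H'sub H'cl.
  exists (set_val @^-1` K'); split.
  + split.
    * by rewrite /preimage /= eone.
    * by move=> x y Kx Ky; rewrite /preimage /= emul; exact: KM.
    * by move=> x Kx; rewrite /preimage /= einv; exact: KI.
  + by apply: preimage_closed => // ? _; exact: svc.
  + split.
    * move=> g.
      have [h' [k' [[h Hh <-] Kk e]]] := dec (set_val g).
      have ek : k' = mul (inv (set_val h)) (set_val g).
        by rewrite e (gmulKg mA m1 mV).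
      have Lk : L k' by rewrite ek; apply: LM; [apply: LI|]; exact: set_valP.
      exists h, (exist _ k' (mem_set Lk)); split => //.
      by apply: svi; rewrite emul e.
    * rewrite predeqE => x; split.
        move=> [Hx Kx].
        have : (H' `&` K') (set_val x) by split => //; exists x.
        by rewrite int => ex; apply: svi; rewrite eone.
      move=> ->; split => //; by rewrite /preimage /= eone.
Qed.

Unset Implicit Arguments.

Theorem theorem2p4 :
  (* (1) the cartesian product of profinite-C groups is profinite-C *)
  (forall (I : Type) (G : I -> topologicalType)
     (mul : forall i, G i -> G i -> G i) (inv : forall i, G i -> G i)
     (one : forall i, G i),
     (forall i, profinite_C (mul i) (inv i) (one i)) ->
     profinite_C (T := prod_topology G)
       (fun x y i => mul i (x i) (y i)) (fun x i => inv i (x i)) one) /\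
  (* (2) the inverse limit of an inverse system of profinite-C groups with
     continuous homomorphisms is profinite-C (with the induced group law and
     the subspace topology) *)
  (forall (d : Order.disp_t) (I : porderType d) (G : I -> topologicalType)
     (mul : forall i, G i -> G i -> G i) (inv : forall i, G i -> G i)
     (one : forall i, G i)
     (f : forall i j : I, (i <= j)%O -> G j -> G i),
     (forall i, profinite_C (mul i) (inv i) (one i)) ->
     (forall i j (hij : (i <= j)%O), continuous (f i j hij)) ->
     (forall i j (hij : (i <= j)%O) x y,
         f i j hij (mul j x y) = mul i (f i j hij x) (f i j hij y)) ->
     (forall i (hii : (i <= i)%O) x, f i i hii x = x) ->
     (forall i j k (hij : (i <= j)%O) (hjk : (j <= k)%O) (hik : (i <= k)%O) x,
         f i k hik x = f i j hij (f j k hjk x)) ->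
     exists (lmul : inv_limit f -> inv_limit f -> inv_limit f)
            (linv : inv_limit f -> inv_limit f) (lone : inv_limit f),
       [/\ (forall x y, set_val (lmul x y) = (fun i => mul i (set_val x i) (set_val y i))),
           (forall x, set_val (linv x) = (fun i => inv i (set_val x i))),
           set_val lone = one &
           profinite_C lmul linv lone]).
Proof.
split; first exact: prod_C.
move=> d I G mul inv one f hC fc fhom _ _.
have hG i := (hC i).1.
have mA i : associative (mul i) by case: (hG i) => [[]].
have m1 i : left_id (one i) (mul i) by case: (hG i) => [[]].
have mV i : left_inverse (one i) (inv i) (mul i) by case: (hG i) => [[]].
have hs i : hausdorff_space (G i) by case: (hG i).
have f1 i j hij : f i j hij (one j) = one i.
  apply: (gmulI (mA i) (m1 i) (mV i) (x := f i j hij (one j))).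
  by rewrite -fhom m1 (gmulg1 (mA i) (m1 i) (mV i)).
have finv i j hij x : f i j hij (inv j x) = inv i (f i j hij x).
  apply: (gmulI (mA i) (m1 i) (mV i) (x := f i j hij x)).
  by rewrite -fhom !(gmulgV (mA _) (m1 _) (mV _)) f1.
pose L := inv_limit f.
have L1 : L one by move=> i j hij; exact: f1.
have LM : forall x y : prod_topology G, L x -> L y -> L (fun i => mul i (x i) (y i)).
  by move=> x y Lx Ly i j hij; rewrite fhom Lx Ly.
have LI : forall x : prod_topology G, L x -> L (fun i => inv i (x i)).
  by move=> x Lx i j hij; rewrite finv Lx.
have Lcl : closed L.
  have -> : L = \bigcap_(i in setT) \bigcap_(j in setT) \bigcap_(hij in setT)
      [set x : prod_topology G | f i j hij (x j) = x i].
    rewrite predeqE => x; split => [hx i _ j _ hij _|hx i j hij]; first exact: hx.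
    exact: hx.
  apply: closed_bigI => i _; apply: closed_bigI => j _; apply: closed_bigI => hij _.
  apply: closed_eqz => //.
    move=> x; exact: (continuous_comp (@proj_continuous {classic I} G j x) (fc i j hij (x j))).
  exact: (@proj_continuous {classic I} G i).
pose lmul (x y : L) : L := SigSub (mem_set (LM _ _ (set_valP x) (set_valP y))).
pose linv (x : L) : L := SigSub (mem_set (LI _ (set_valP x))).
pose lone : L := SigSub (mem_set L1).
exists lmul, linv, lone; split => //.
apply: (sub_C (prod_C hC)) => //.
Qed.
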